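(* Let $q\ge2$ and $r\in\{0,1,\dots,q-1\}$ be integers and let $p>q+r$ be an integer. Let $A=\{d\in\{0,1,\dots,p-1\}: d\equiv r \pmod q\}$, $s=\#A$ (so $s\ge 2$ and $h(i)=qi+r$ for $0\le i\le s-1$). Then \[ m=\inf_{n\ge1}b_n=\frac{q(s-1)+r}{p-1},\qquad M=\sup_{n\ge1}b_n=\frac{q(p-1)+pr}{p-1}. \]
   Context: For integers $p> s\ge 2$ and $A\subset\{0,\dots,p-1\}$ with $\#A=s$, let $h:\{0,\dots,s-1\}\to A$ be the strictly increasing bijection. For a positive integer $n$ with base-$s$ expansion $n=\sum_{i=0}^k\varepsilon_i s^i$ ($\varepsilon_k\ne0$), put $a_n=\sum_{i=0}^k h(\varepsilon_i)p^i$ and $b_n=a_n/n^{\log_s p}$. *)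

(* Defs.v *)
From Stdlib Require Import Reals Lra Lia Arith List.
Open Scope R_scope.

Definition digitset (q r p : nat) : list nat :=
  filter (fun d => Nat.eqb (Nat.modulo d q) r) (seq 0 p).

(* h : {0..s-1} -> A, the strictly increasing bijection (i-th smallest element
   of a set given as an increasing list). *)
Definition hmap (A : list nat) (i : nat) : nat := nth i A 0%nat.

(* a_n = sum_i h(eps_i) p^i where n = sum_i eps_i s^i (base-s expansion,
   eps_k <> 0).  Computed by recursion on n with fuel (fuel n suffices). *)
Fixpoint a_aux (s p : nat) (h : nat -> nat) (fuel n : nat) : nat :=
  match fuel with
  | O => 0%nat
  | S f => if Nat.eqb n 0 then 0%nat
           else (h (Nat.modulo n s) + p * a_aux s p h f (Nat.div n s))%nat
  end.

Definition a_seq (s p : nat) (h : nat -> nat) (n : nat) : nat := a_aux s p h n n.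

Definition b_seq (s p : nat) (h : nat -> nat) (n : nat) : R :=
  INR (a_seq s p h n) / Rpower (INR n) (ln (INR p) / ln (INR s)).

Definition is_lower_bound (E : R -> Prop) (m : R) : Prop := forall x, E x -> m <= x.
Definition is_glb (E : R -> Prop) (m : R) : Prop :=
  is_lower_bound E m /\ (forall b, is_lower_bound E b -> b <= m).

(* Main.v *)
Require Import Defs.
From Stdlib Require Import Reals Lra Lia Arith List.
Open Scope R_scope.

Lemma mono_deriv (f f' : R -> R) a b : a <= b ->
  (forall c, a <= c <= b -> derivable_pt_lim f c (f' c)) ->
  (forall c, a <= c <= b -> 0 <= f' c) -> f a <= f b.
Proof.
intros Hab Hd Hp. destruct (Req_dec a b) as [<-|Hne]; [lra|].
destruct (MVT_cor2 f f' a b ltac:(lra) Hd) as [c [Hc1 Hc2]].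
assert (0 <= f' c) by (apply Hp; lra).
assert (0 <= f' c * (b - a)) by (apply Rmult_le_pos; lra). lra.
Qed.

Section G.
Variable al : R.
Hypothesis Hal : 1 <= al.
Let g t := Rpower t al.
Let g' t := al * Rpower t (al - 1).

Lemma gd c : 0 < c -> derivable_pt_lim g c (g' c).
Proof. intros. apply derivable_pt_lim_power; auto. Qed.

Lemma g'_mono x y : 0 < x <= y -> g' x <= g' y.
Proof. intros. unfold g'. apply Rmult_le_compat_l; [lra|].
apply Rle_Rpower_l; lra. Qed.

Lemma g'_ge1 x : 1 <= x -> 1 <= g' x.
Proof. intros. unfold g'.
assert (1 <= Rpower x (al - 1)).
{ rewrite <- (Rpower_O x) at 1 by lra. apply Rle_Rpower; lra. }
assert (0 <= (al - 1) * (Rpower x (al - 1) - 1)) by (apply Rmult_le_pos; lra). nra. Qed.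

Lemma g_pos x : 0 < g x.
Proof. unfold g, Rpower. apply exp_pos. Qed.

Lemma g_split x : 0 < x -> g x = g' x * x / al.
Proof. intros. unfold g, g'.
replace (Rpower x al) with (Rpower x ((al - 1) + 1)) by (f_equal; ring).
rewrite Rpower_plus, Rpower_1 by lra. field. lra. Qed.

Lemma G1 x y : 1 <= x <= y -> g x - x <= g y - y.
Proof. intros.
apply (mono_deriv (fun t => g t - t) (fun t => g' t - 1)); [lra| |].
- intros c Hc. apply derivable_pt_lim_minus; [apply gd; lra|].
  apply derivable_pt_lim_id.
- intros c Hc. pose proof (g'_ge1 c). lra.
Qed.

Lemma C2 x y d : 0 < y <= x -> 0 <= d -> g (y + d) - g y <= g (x + d) - g x.
Proof. intros.
apply (mono_deriv (fun t => g (t + d) - g t) (fun t => g' (t + d) * 1 - g' t)); [lra| |].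
- intros c Hc. apply derivable_pt_lim_minus; [|apply gd; lra].
  apply (derivable_pt_lim_comp (fun t => t + d) g c 1 (g' (c + d))).
  + replace 1 with (1 + 0) by ring. apply derivable_pt_lim_plus.
    apply derivable_pt_lim_id. apply derivable_pt_lim_const.
  + apply gd; lra.
- intros c Hc. pose proof (g'_mono c (c + d)). lra.
Qed.

Lemma CH s t : 1 <= t <= s -> (g t - 1) * (s - 1) <= (g s - 1) * (t - 1).
Proof. intros.
assert (g 1 = 1) by (unfold g, Rpower; rewrite ln_1, Rmult_0_r; apply exp_0).
destruct (Req_dec t 1) as [->|H1]; [rewrite H0; lra|].
destruct (Req_dec t s) as [->|H2]; [lra|].
destruct (MVT_cor2 g g' 1 t ltac:(lra) ltac:(intros; apply gd; lra)) as [c1 [E1 F1]].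
destruct (MVT_cor2 g g' t s ltac:(lra) ltac:(intros; apply gd; lra)) as [c2 [E2 F2]].
pose proof (g'_mono c1 c2 ltac:(lra)).
rewrite H0 in E1.
assert (g t - 1 = g' c1 * (t - 1)) by lra.
assert (g s - 1 = g' c1 * (t - 1) + g' c2 * (s - t)) by lra.
rewrite H4, H5.
assert (0 <= (g' c2 - g' c1) * ((t - 1) * (s - t))).
{ apply Rmult_le_pos; [lra|]. apply Rmult_le_pos; lra. }
nra.
Qed.

(* g(X-1) >= g(X) (1 - al/X) *)
Lemma LB1 X : 2 <= X -> g X - g (X - 1) <= g' X.
Proof. intros.
assert (H1 : - (g (X - 1) - g' X * (X - 1)) <= - (g X - g' X * X)).
{ apply (mono_deriv (fun t => - (g t - g' X * t)) (fun t => - (g' t - g' X * 1))); [lra| |].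
  - intros c Hc. apply derivable_pt_lim_opp. apply derivable_pt_lim_minus; [apply gd; lra|].
    apply derivable_pt_lim_scal. apply derivable_pt_lim_id.
  - intros c Hc. pose proof (g'_mono c X). lra. }
lra.
Qed.

End G.

Lemma digit_char q r N : (1 <= q)%nat -> (r < q)%nat ->
  exists k, filter (fun d => Nat.eqb (Nat.modulo d q) r) (seq 0 N)
            = map (fun i => q*i+r)%nat (seq 0 k) /\
            forall i, (q*i+r < N <-> i < k)%nat.
Proof.
intros Hq Hr. induction N as [|N [k [E F]]].
- exists 0%nat. split; [reflexivity|]. intros; lia.
- rewrite seq_S, filter_app, E. simpl.
  destruct (Nat.eqb_spec (N mod q) r) as [Hm|Hm].
  + assert (HN : N = (q * (N / q) + r)%nat).
    { rewrite <- Hm. apply Nat.div_mod. lia. }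
    set (j := (N / q)%nat) in *.
    assert (Hk : k = j).
    { destruct (Nat.lt_trichotomy k j) as [Hl|[Hl|Hl]]; auto.
      - exfalso. assert (q * k < q * j)%nat by (apply Nat.mul_lt_mono_pos_l; lia).
        assert (k < k)%nat by (apply F; lia). lia.
      - exfalso. assert (q * j + r < N)%nat by (apply F; lia). lia. }
    subst k. exists (S j). split.
    * rewrite seq_S, map_app. simpl. rewrite <- HN. reflexivity.
    * intros i. split; intros Hi.
      -- assert (q * i <= q * j)%nat by lia.
         assert (i <= j)%nat by (apply (Nat.mul_le_mono_pos_l _ _ q); lia). lia.
      -- assert (q * i <= q * j)%nat by (apply Nat.mul_le_mono_l; lia). lia.
  + exists k. split; [rewrite app_nil_r; reflexivity|].
    intros i. rewrite <- F. split; intros Hi; [|lia].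
    destruct (Nat.eq_dec (q*i+r) N) as [He|He]; [|lia].
    exfalso. apply Hm. rewrite <- He.
    rewrite Nat.add_comm, Nat.mul_comm, Nat.Div0.mod_add. apply Nat.mod_small; lia.
Qed.

Lemma a_aux_fuel s p h : (2 <= s)%nat -> forall f g n, (n <= f)%nat -> (n <= g)%nat ->
  a_aux s p h f n = a_aux s p h g n.
Proof.
intros Hs. induction f as [|f IH]; intros g n Hf Hg.
- assert (n = 0%nat) by lia. subst. destruct g; reflexivity.
- destruct g as [|g].
  + assert (n = 0%nat) by lia. subst. reflexivity.
  + simpl. destruct (Nat.eqb_spec n 0); [reflexivity|].
    f_equal. f_equal. apply IH.
    * assert (n / s < n)%nat by (apply Nat.div_lt; lia). lia.
    * assert (n / s < n)%nat by (apply Nat.div_lt; lia). lia.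
Qed.

Lemma a_seq_step s p h n : (2 <= s)%nat -> (1 <= n)%nat ->
  a_seq s p h n = (h (n mod s) + p * a_seq s p h (n / s))%nat.
Proof.
intros Hs Hn. unfold a_seq. destruct n as [|n]; [lia|]. simpl a_aux at 1.
destruct (Nat.eqb_spec (S n) 0); [lia|]. f_equal. f_equal.
apply a_aux_fuel; auto.
- assert (S n / s < S n)%nat by (apply Nat.div_lt; lia). lia.
Qed.

Lemma Rdiv_le_0_compat x y : 0 <= x -> 0 < y -> 0 <= x / y.
Proof. intros. apply Rmult_le_pos; [lra|]. left. apply Rinv_0_lt_compat; lra. Qed.

Section Main.
Variables (q r p s : nat) (h : nat -> nat) (al : R).
Hypotheses (Hs : (2 <= s)%nat) (Hq : (1 <= q)%nat) (Hps : (s < p)%nat)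
  (Hh : forall e, (e < s)%nat -> h e = (q * e + r)%nat)
  (Hal : 1 <= al) (Hsp : Rpower (INR s) al = INR p)
  (Hqsr : (q * (s - 1) + r < p)%nat).

Let g t := Rpower t al.
Let a n := INR (a_seq s p h n).
Let S := INR s.
Let P := INR p.
Let c := INR r / (P - 1).
Let m0 := (INR q * (S - 1) + INR r) / (P - 1).
Let M := (INR q * (P - 1) + P * INR r) / (P - 1).

Lemma SP : 2 <= S /\ S + 1 <= P.
Proof. unfold S, P. split. apply (le_INR 2). lia.
rewrite <- S_INR. apply le_INR. lia. Qed.

Lemma g1 : g 1 = 1.
Proof. unfold g, Rpower. rewrite ln_1, Rmult_0_r. apply exp_0. Qed.

Lemma gmul x : 0 < x -> g (S * x) = P * g x.
Proof. intros. pose proof SP. unfold g. rewrite <- Rpower_mult_distr by lra.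
unfold S, P. rewrite Hsp. reflexivity. Qed.

Lemma gpow k : g (S ^ k) = P ^ k.
Proof. pose proof SP. induction k. simpl. apply g1.
simpl. rewrite gmul. rewrite IHk. reflexivity. apply pow_lt; lra. Qed.

Lemma gS : g S = P.
Proof. exact Hsp. Qed.

Lemma astep n : (1 <= n)%nat ->
  a n = INR q * INR (n mod s) + INR r + P * a (n / s).
Proof. intros. unfold a. rewrite a_seq_step by lia.
rewrite Hh by (apply Nat.mod_upper_bound; lia).
rewrite plus_INR, mult_INR, plus_INR, mult_INR. reflexivity. Qed.

Lemma a0 : a 0 = 0.
Proof. reflexivity. Qed.

Lemma cdef : P * c = INR r + c /\ M = INR q + P * c /\ 0 <= c.
Proof. pose proof SP. unfold c, M. split; [field; lra|]. split; [field; lra|].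
apply Rdiv_le_0_compat. apply pos_INR. lra. Qed.

Lemma upper n : (1 <= n)%nat -> a n + c <= M * g (INR n).
Proof.
pose proof SP as HSP. destruct cdef as [C1 [C2 C3]].
induction n as [n IH] using lt_wf_ind. intros Hn.
pose proof (Nat.div_mod n s ltac:(lia)) as Hdm.
pose proof (Nat.mod_upper_bound n s ltac:(lia)) as Hmb.
set (k := (n / s)%nat) in *. set (e := (n mod s)%nat) in *.
rewrite astep by lia. fold k e.
assert (He : 0 <= INR e) by apply pos_INR.
assert (Hq0 : 0 <= INR q) by apply pos_INR.
destruct (Nat.eq_dec k 0) as [Hk|Hk].
- rewrite Hk, a0. rewrite Hk in Hdm. assert (n = e) by lia.
  assert (He1 : 1 <= INR e) by (apply (le_INR 1); lia).
  pose proof (G1 al Hal 1 (INR e) ltac:(lra)). fold g in H0. rewrite g1 in H0.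
  replace (INR n) with (INR e) by congruence. rewrite C2.
  assert (0 <= INR q * (g (INR e) - INR e)) by (apply Rmult_le_pos; lra).
  assert (0 <= P * c * (g (INR e) - 1)) by (apply Rmult_le_pos; [apply Rmult_le_pos|]; lra).
  nra.
- assert (Hk1 : 1 <= INR k) by (apply (le_INR 1); lia).
  assert (Hkn : (k < n)%nat) by (apply Nat.div_lt; lia).
  specialize (IH k Hkn ltac:(lia)).
  assert (Hn' : INR n = S * INR k + INR e).
  { rewrite Hdm at 1. rewrite plus_INR, mult_INR. reflexivity. }
  pose proof (G1 al Hal (S * INR k) (INR n) ltac:(nra)). fold g in H.
  rewrite gmul in H by lra.
  assert (M >= INR q) by (rewrite C2; nra).
  assert (M * g (INR n) >= M * (P * g (INR k) + INR e)).
  { apply Rle_ge, Rmult_le_compat_l; nra. }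
  nra.
Qed.

Lemma lower n : m0 * g (INR n + 1) <= a n + m0.
Proof.
pose proof SP as HSP.
assert (Hm0 : 0 <= m0).
{ unfold m0. apply Rdiv_le_0_compat; [|lra].
  pose proof (pos_INR q); pose proof (pos_INR r). nra. }
assert (Hm0d : m0 * (P - 1) = INR q * (S - 1) + INR r) by (unfold m0; field; lra).
induction n as [n IH] using lt_wf_ind.
destruct (Nat.eq_dec n 0) as [->|Hn].
{ rewrite a0. simpl INR. rewrite Rplus_0_l, g1. lra. }
pose proof (Nat.div_mod n s ltac:(lia)) as Hdm.
pose proof (Nat.mod_upper_bound n s ltac:(lia)) as Hmb.
set (k := (n / s)%nat) in *. set (e := (n mod s)%nat) in *.
rewrite astep by lia. fold k e.
assert (Hkn : (k < n)%nat) by (apply Nat.div_lt; lia).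
specialize (IH k Hkn).
assert (He : 0 <= INR e) by apply pos_INR.
assert (Hes : INR e + 1 <= S) by (rewrite <- S_INR; apply le_INR; lia).
assert (Hq0 : 0 <= INR q) by apply pos_INR.
assert (Hr0 : 0 <= INR r) by apply pos_INR.
assert (Hk0 : 0 <= INR k) by apply pos_INR.
assert (Hn' : INR n = S * INR k + INR e).
{ rewrite Hdm at 1. rewrite plus_INR, mult_INR. reflexivity. }
pose proof (C2 al Hal (S * INR k + INR e + 1) (INR e + 1) (S - 1 - INR e)
   ltac:(nra) ltac:(lra)) as HC.
fold g in HC.
replace (INR e + 1 + (S - 1 - INR e)) with S in HC by ring.
replace (S * INR k + INR e + 1 + (S - 1 - INR e)) with (S * (INR k + 1)) in HC by ring.
rewrite gS, gmul in HC by lra.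
pose proof (CH al Hal S (INR e + 1) ltac:(lra)) as HH. fold g in HH. rewrite gS in HH.
replace (INR e + 1 - 1) with (INR e) in HH by ring.
assert (Key : m0 * (g (INR e + 1) - 1) <= INR q * INR e + INR r).
{ set (G := g (INR e + 1) - 1) in *.
  assert (m0 * G * (S - 1) <= m0 * ((P - 1) * INR e)) by
    (rewrite Rmult_assoc; apply Rmult_le_compat_l; lra).
  assert (m0 * ((P - 1) * INR e) = (INR q * (S - 1) + INR r) * INR e) by
    (rewrite <- Hm0d; ring).
  assert (INR r * INR e <= INR r * (S - 1)) by (apply Rmult_le_compat_l; lra).
  assert (m0 * G * (S - 1) <= (INR q * INR e + INR r) * (S - 1)) by nra.
  apply (Rmult_le_reg_r (S - 1)); lra. }
rewrite Hn'.
assert (m0 * g (S * INR k + INR e + 1) <= m0 * (P * g (INR k + 1) - P + g (INR e + 1)))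
  by (apply Rmult_le_compat_l; lra).
nra.
Qed.



Lemma spow_pos k : (1 <= s ^ k)%nat.
Proof. induction k; simpl; nia. Qed.

Lemma a_pow k : a (s ^ k) = M * P ^ k - c.
Proof.
pose proof SP as HSP.
induction k.
- simpl Nat.pow. pose proof (astep 1 (le_n 1)) as E.
  rewrite Nat.mod_small, Nat.div_small in E by lia.
  rewrite E, a0. unfold M, c. simpl INR. simpl pow. field. lra.
- pose proof (astep (s ^ Datatypes.S k) ltac:(pose proof (spow_pos (Datatypes.S k)); lia)) as E.
  replace ((s ^ Datatypes.S k) mod s)%nat with 0%nat in E.
  2:{ apply (Nat.mod_unique _ _ (s ^ k)). lia. simpl. lia. }
  replace ((s ^ Datatypes.S k) / s)%nat with (s ^ k)%nat in E.
  2:{ apply (Nat.div_unique _ _ _ 0). lia. simpl. lia. }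
  rewrite E, IHk. simpl INR. unfold M, c. simpl pow. field. lra.
Qed.

Lemma a_pow1 k : a (s ^ k - 1) = m0 * (P ^ k - 1).
Proof.
pose proof SP as HSP.
induction k.
- simpl. rewrite Rminus_diag, Rmult_0_r. reflexivity.
- pose proof (spow_pos k) as Hk.
  pose proof (astep (s ^ Datatypes.S k - 1) ltac:(simpl; nia)) as E.
  assert (Hd : (s ^ Datatypes.S k - 1 = s * (s ^ k - 1) + (s - 1))%nat) by (simpl; nia).
  replace ((s ^ Datatypes.S k - 1) mod s)%nat with (s - 1)%nat in E.
  2:{ apply (Nat.mod_unique _ _ (s ^ k - 1)). lia. exact Hd. }
  replace ((s ^ Datatypes.S k - 1) / s)%nat with (s ^ k - 1)%nat in E.
  2:{ apply (Nat.div_unique _ _ _ (s - 1)). lia. exact Hd. }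
  rewrite E, IHk. rewrite minus_INR by lia. simpl INR. unfold m0. fold S. simpl pow.
  field. lra.
Qed.


Lemma gpos x : 0 < g x.
Proof. unfold g, Rpower. apply exp_pos. Qed.

Lemma m0_nonneg : 0 <= m0.
Proof. pose proof SP. unfold m0. apply Rdiv_le_0_compat; [|lra].
  pose proof (pos_INR q); pose proof (pos_INR r). nra. Qed.

Lemma b_lower n : (1 <= n)%nat -> m0 <= a n / g (INR n).
Proof. intros Hn. pose proof (lower n). pose proof m0_nonneg.
assert (H1 : 1 <= INR n) by (apply (le_INR 1); lia).
pose proof (G1 al Hal (INR n) (INR n + 1) ltac:(lra)). fold g in H2.
pose proof (gpos (INR n)).
apply (Rmult_le_reg_r (g (INR n))); [lra|].
replace (a n / g (INR n) * g (INR n)) with (a n) by (field; lra). nra. Qed.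

Lemma b_upper n : (1 <= n)%nat -> a n / g (INR n) <= M.
Proof. intros Hn. pose proof (upper n Hn). destruct cdef as [_ [_ C3]].
pose proof (gpos (INR n)).
apply (Rmult_le_reg_r (g (INR n))); [lra|].
replace (a n / g (INR n) * g (INR n)) with (a n) by (field; lra). lra. Qed.

Lemma gSk k : g (INR (s ^ k)) = P ^ k.
Proof. rewrite pow_INR. apply gpow. Qed.

Lemma near_M b : b < M -> exists n, (1 <= n)%nat /\ b < a n / g (INR n).
Proof. intros Hb. pose proof SP as HSP. destruct cdef as [_ [_ C3]].
destruct (INR_unbounded (c / (M - b))) as [k Hk].
exists (s ^ k)%nat. split; [apply spow_pos|].
rewrite gSk, a_pow.
assert (HPk : INR k < P ^ k).
{ unfold P. rewrite <- pow_INR. apply lt_INR. apply Nat.pow_gt_lin_r. lia. }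
assert (c < (M - b) * P ^ k).
{ assert (c / (M - b) * (M - b) = c) by (field; lra).
  assert (c / (M - b) * (M - b) < P ^ k * (M - b)) by (apply Rmult_lt_compat_r; lra). lra. }
assert (0 < P ^ k) by (apply pow_lt; lra).
apply (Rmult_lt_reg_r (P ^ k)); [lra|].
replace ((M * P ^ k - c) / P ^ k * P ^ k) with (M * P ^ k - c) by (field; lra). nra.
Qed.

Lemma near_m b : m0 < b -> exists n, (1 <= n)%nat /\ a n / g (INR n) < b.
Proof. intros Hb. pose proof SP as HSP. pose proof m0_nonneg as Hm.
destruct (INR_unbounded (b * al / (b - m0))) as [k0 Hk0].
set (k := Datatypes.S k0).
assert (Hsk : (2 <= s ^ k)%nat).
{ unfold k. simpl. pose proof (spow_pos k0). nia. }
exists (s ^ k - 1)%nat. split; [lia|].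
rewrite a_pow1. rewrite minus_INR by lia. rewrite pow_INR. fold S.
set (X := S ^ k).
assert (HX : INR k0 < X).
{ unfold X, S. rewrite <- pow_INR. apply lt_INR.
  pose proof (Nat.pow_gt_lin_r s k ltac:(lia)). unfold k in *. lia. }
assert (HX2 : 2 <= X) by (unfold X, S; rewrite <- pow_INR; apply (le_INR 2); lia).
pose proof (LB1 al Hal X HX2) as L. fold g in L; simpl in L.
pose proof (g_split al Hal X ltac:(lra)) as GS. fold g in GS.
assert (GX : g X = P ^ k) by apply gpow.
set (D := al * Rpower X (al - 1)) in *.
assert (HD : D = al * P ^ k / X) by (rewrite <- GX, GS; field; lra).
simpl INR. 
assert (Hb0 : 0 < b) by lra.
assert (HT : b * al < (b - m0) * X).
{ assert (b * al / (b - m0) * (b - m0) = b * al) by (field; lra).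
  assert (b * al / (b - m0) * (b - m0) < X * (b - m0)) by (apply Rmult_lt_compat_r; lra). lra. }
assert (HPk : 0 < P ^ k) by (apply pow_lt; lra).
pose proof (gpos (X - 1)).
assert (Hg : P ^ k * (1 - al / X) <= g (X - 1)).
{ rewrite HD in L. rewrite GX in L. replace (P ^ k * (1 - al / X)) with (P ^ k - al * P ^ k / X) by (field; lra). lra. }
apply (Rmult_lt_reg_r (g (X - 1))); [lra|].
replace (m0 * (P ^ k - 1) / g (X - 1) * g (X - 1)) with (m0 * (P ^ k - 1)) by (field; lra).
assert (b * (P ^ k * (1 - al / X)) <= b * g (X - 1)) by (apply Rmult_le_compat_l; lra).
assert (m0 * (P ^ k - 1) <= m0 * P ^ k) by (apply Rmult_le_compat_l; lra).
assert (m0 < b * (1 - al / X)).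
{ replace (b * (1 - al / X)) with (b - b * al / X) by (field; lra).
  assert (b * al / X < b - m0).
  { apply (Rmult_lt_reg_r X); [lra|]. replace (b * al / X * X) with (b * al) by (field; lra). lra. }
  lra. }
assert (m0 * P ^ k < b * (1 - al / X) * P ^ k) by (apply Rmult_lt_compat_r; lra).
nra.
Qed.

End Main.

Theorem theorem5 (q r p : nat) :
  (2 <= q)%nat -> (r < q)%nat -> (q + r < p)%nat ->
  let A := digitset q r p in
  let s := length A in
  let b := b_seq s p (hmap A) in
  is_glb (fun x => exists n : nat, (1 <= n)%nat /\ x = b n)
         ((INR q * (INR s - 1) + INR r) / (INR p - 1)) /\
  is_lub (fun x => exists n : nat, (1 <= n)%nat /\ x = b n)
         ((INR q * (INR p - 1) + INR p * INR r) / (INR p - 1)).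
Proof.
intros Hq Hr Hp. cbv zeta.
destruct (digit_char q r p ltac:(lia) Hr) as [k [E F]].
set (A := digitset q r p) in *.
assert (HL : length A = k) by (unfold A, digitset; rewrite E, length_map, length_seq; reflexivity).
rewrite HL.
assert (Hs : (2 <= k)%nat) by (apply F; lia).
assert (Hqsr : (q * (k - 1) + r < p)%nat) by (apply F; lia).
assert (Hps : (k < p)%nat) by nia.
assert (Hh : forall e, (e < k)%nat -> hmap A e = (q * e + r)%nat).
{ intros e He. unfold hmap, A, digitset. rewrite E.
  assert (G : forall (f : nat -> nat) l, (e < length l)%nat -> nth e (map f l) 0%nat = f (nth e l 0%nat)).
  { intros f l Hl. rewrite (nth_indep _ 0%nat (f 0%nat)) by (rewrite length_map; lia).
    apply map_nth. }
  rewrite G by (rewrite length_seq; lia). rewrite seq_nth by lia. reflexivity. }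
set (al := ln (INR p) / ln (INR k)).
assert (HS : 2 <= INR k) by (apply (le_INR 2); lia).
assert (HSP : INR k < INR p) by (apply lt_INR; lia).
assert (Hlk : 0 < ln (INR k)) by (rewrite <- ln_1; apply ln_increasing; lra).
assert (Hlp : ln (INR k) < ln (INR p)) by (apply ln_increasing; lra).
assert (Hal : 1 <= al).
{ unfold al. apply (Rmult_le_reg_r (ln (INR k))); [lra|].
  replace (ln (INR p) / ln (INR k) * ln (INR k)) with (ln (INR p)) by (field; lra). lra. }
assert (Hsp : Rpower (INR k) al = INR p).
{ unfold Rpower, al. replace (ln (INR p) / ln (INR k) * ln (INR k)) with (ln (INR p)) by (field; lra).
  apply exp_ln. lra. }
assert (Hq1 : (1 <= q)%nat) by lia.
unfold b_seq. fold al.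
split; split.
- intros x [n [Hn ->]]. apply (b_lower q r p k (hmap A) al Hs Hq1 Hps Hh Hal Hsp Hqsr n Hn).
- intros be Hbe. apply Rnot_lt_le. intros Hlt.
  destruct (near_m q r p k (hmap A) al Hs Hq1 Hps Hh Hal Hsp Hqsr be Hlt) as [n [Hn Hn2]].
  pose proof (Hbe _ (ex_intro _ n (conj Hn eq_refl))). simpl in *. lra.
- intros x [n [Hn ->]]. apply (b_upper q r p k (hmap A) al Hs Hq1 Hps Hh Hal Hsp Hqsr n Hn).
- intros be Hbe. apply Rnot_lt_le. intros Hlt.
  destruct (near_M q r p k (hmap A) al Hs Hq1 Hps Hh Hsp Hqsr be Hlt) as [n [Hn Hn2]].
  pose proof (Hbe _ (ex_intro _ n (conj Hn eq_refl))). simpl in *. lra.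
Qed.
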